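(* Let $d\ge2$ be an integer. For $\lambda\in(0,1)$ let $\bar F_\lambda$ be the solution of $\bar F'(w)=\lambda\bar F(w)^d-\bar F(w)$, $\bar F(0)=\lambda$, and let $\mathbb E[W_\lambda]=\int_0^\infty\bar F_\lambda(w)^d\,dw$. Then $$\lim_{\lambda\to1^-}-\frac{\mathbb E[W_\lambda]}{\log(1-\lambda)}=\frac1{d-1}.$$
   Context: $\bar F_\lambda$ is the limiting ccdf of the workload of a queue under the LL($d$) policy (exponential job sizes of mean 1, arrival rate $\lambda$ per server), and $\mathbb E[W_\lambda]$ the corresponding mean waiting time. *)

(* Defs.v *)
From Stdlib Require Import Reals.
From Coquelicot Require Import Coquelicot.
Open Scope R_scope.

Definition is_LL_ccdf (d : nat) (lam : R) (Fbar : R -> R) : Prop :=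
  Fbar 0 = lam /\
  filterlim Fbar (at_right 0) (locally lam) /\
  (forall w, 0 < w -> is_derive Fbar w (lam * Fbar w ^ d - Fbar w)).

Definition mean_wait (d : nat) (Fbar : R -> R) : R :=
  RInt_gen (fun w => Fbar w ^ d) (at_point 0) (Rbar_locally p_infty).

(* Main.v *)
Require Import Defs.
From Stdlib Require Import Reals.
From Coquelicot Require Import Coquelicot.
From Stdlib Require Import Lra Lia Classical.
Open Scope R_scope.

Lemma incr_on (h dh : R -> R) a b :
  a <= b -> (forall x, a<x<b -> is_derive h x (dh x)) -> (forall x, a<x<b -> 0<=dh x) ->
  (forall x, a<=x<=b -> continuous h x) -> h a <= h b.
Proof.
 intros Hab Hd Hp Hc. destruct (Req_dec a b) as [->|Hne]; [lra|].
 assert (Hlt: a<b) by lra.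
 assert (pr1: forall c, a<c<b -> derivable_pt h c).
 { intros c Hc'. exists (dh c). apply is_derive_Reals. auto. }
 assert (pr2: forall c, a<c<b -> derivable_pt id c) by (intros; apply derivable_pt_id).
 assert (Hc2 : forall c, a<=c<=b -> continuity_pt h c).
 { intros c H. apply continuity_pt_filterlim. apply Hc; auto. }
 destruct (MVT h id a b pr1 pr2 Hlt Hc2 (fun c _ => derivable_continuous_pt _ _ (derivable_pt_id c))) as [c [P HP]].
 rewrite (derive_pt_eq_0 _ _ _ (pr1 c P) (proj1 (is_derive_Reals _ _ _) (Hd c P))) in HP.
 rewrite (derive_pt_eq_0 id c 1 (pr2 c P) (derivable_pt_lim_id c)) in HP. unfold id in HP.
 specialize (Hp c P). nra.
Qed.

Lemma ball_R (x e y : R) : ball x e y <-> Rabs (y - x) < e.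
Proof. reflexivity. Qed.

Lemma ball_R2 (x e y : R) : ball x e y -> x - e < y < x + e.
Proof. intro H. change (Rabs (y - x) < e) in H. apply Rabs_def2 in H. lra. Qed.

Lemma G_cont (lam : R) (f : R -> R) :
  f 0 = lam -> filterlim f (at_right 0) (locally lam) ->
  (forall w, 0 < w -> ex_derive f w) ->
  forall x, continuous (fun w => f (Rabs w)) x.
Proof.
 intros H0 Hr Hd x.
 destruct (Req_dec x 0) as [->|Hx].
 - unfold continuous. rewrite Rabs_R0, H0.
   intros P HP. destruct (Hr P HP) as [e He].
   exists e. intros y Hy. destruct (Req_dec y 0) as [->|Hy0].
   + rewrite Rabs_R0, H0. now apply locally_singleton.
   + change R in y. assert (Hy' : Rabs y < e).
     { pose proof (proj1 (ball_R 0 e y) Hy) as Q. replace (y - 0) with y in Q by ring. exact Q. }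
     apply He. apply ball_R. replace (Rabs y - 0) with (Rabs y) by ring. rewrite Rabs_Rabsolu. auto. apply Rabs_pos_lt; auto.
 - apply continuous_comp.
   + apply continuity_pt_filterlim. apply Rcontinuity_abs.
   + apply (@ex_derive_continuous R_AbsRing R_NormedModule). apply Hd. apply Rabs_pos_lt; auto.
Qed.

Lemma G_deriv (f : R -> R) (df : R -> R) w :
  0 < w -> is_derive f w (df w) -> is_derive (fun t => f (Rabs t)) w (df w).
Proof.
 intros Hw H. eapply is_derive_ext_loc; [|exact H].
 exists (mkposreal w Hw). intros y Hy. apply ball_R2 in Hy. simpl in Hy.
 change R in y. rewrite Rabs_right; [reflexivity|]. lra.
Qed.


Lemma dmult (f g : R -> R) (x df dg : R) : is_derive f x df -> is_derive g x dg ->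
  is_derive (fun t => f t * g t) x (df * g x + f x * dg).
Proof. intros H1 H2. apply (is_derive_mult f g x df dg H1 H2). intros; apply Rmult_comm. Qed.
Lemma dplus (f g : R -> R) (x df dg : R) : is_derive f x df -> is_derive g x dg ->
  is_derive (fun t => f t + g t) x (df + dg).
Proof. intros H1 H2. apply (is_derive_plus f g x df dg H1 H2). Qed.
Lemma dminus (f g : R -> R) (x df dg : R) : is_derive f x df -> is_derive g x dg ->
  is_derive (fun t => f t - g t) x (df - dg).
Proof. intros H1 H2. apply (is_derive_minus f g x df dg H1 H2). Qed.
Lemma deq (f : R -> R) (x l l' : R) : is_derive f x l -> l = l' -> is_derive f x l'.
Proof. intros H ->; exact H. Qed.
Lemma cmult (f g : R -> R) (x:R) : continuous f x -> continuous g x -> continuous (fun t => f t * g t) x.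
Proof. intros H1 H2. apply (continuous_mult f g x H1 H2). Qed.
Lemma cplus (f g : R -> R) (x:R) : continuous f x -> continuous g x -> continuous (fun t => f t + g t) x.
Proof. intros H1 H2. apply (continuous_plus f g x H1 H2). Qed.
Lemma cminus (f g : R -> R) (x:R) : continuous f x -> continuous g x -> continuous (fun t => f t - g t) x.
Proof. intros H1 H2. apply (continuous_minus f g x H1 H2). Qed.
Lemma cpow (f : R -> R) (x:R) n : continuous f x -> continuous (fun t => f t ^ n) x.
Proof.
 intros H. induction n as [|n IH].
 - simpl. apply continuous_const.
 - simpl. apply cmult; auto.
Qed.
Lemma dcont (f : R -> R) (x l:R) : is_derive f x l -> continuous f x.
Proof. intro H. apply (@ex_derive_continuous R_AbsRing R_NormedModule). exists l; exact H. Qed.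

Lemma const_on (h dh : R -> R) a b :
  a <= b -> (forall x, a<x<b -> is_derive h x (dh x)) -> (forall x, a<x<b -> dh x = 0) ->
  (forall x, a<=x<=b -> continuous h x) -> h a = h b.
Proof.
 intros Hab Hd H0 Hc. apply Rle_antisym.
 - apply (incr_on h dh); auto. intros x Hx; rewrite H0; auto; lra.
 - assert (- h a <= - h b); [|lra].
   apply (incr_on (fun t => - h t) (fun t => - dh t)); auto.
   + intros x Hx. apply (is_derive_opp h x (dh x)). auto.
   + intros x Hx; rewrite H0; auto; lra.
   + intros x Hx. apply (continuous_opp h x). auto.
Qed.

Lemma RInt_deriv (g : R -> R) (a x : R) : (forall t, continuous g t) ->
  is_derive (fun w => RInt g a w) x (g x).
Proof.
 intros Hc. apply (is_derive_RInt g (fun w => RInt g a w) a x); auto.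
 exists (mkposreal 1 Rlt_0_1). intros y _. apply (@RInt_correct R_CompleteNormedModule).
 apply ex_RInt_continuous. intros; auto.
Qed.

Lemma ode_sol (k : nat) (lam : R) (G : R -> R) : (1 <= k)%nat -> 0 < lam < 1 ->
  G 0 = lam -> (forall x, continuous G x) ->
  (forall w, 0 < w -> is_derive G w (lam * G w ^ S k - G w)) ->
  forall w, 0 <= w -> G w ^ k * (lam + (/ lam ^ k - lam) * exp (INR k * w)) = 1.
Proof.
 intros Hk Hl H0 Hc Hd.
 set (A := / lam ^ k - lam).
 set (E := fun w => RInt (fun t => G t ^ k) 0 w).
 set (R1 := fun w => G w ^ k * (lam + A * exp (INR k * w)) - 1).
 set (M := fun w => R1 w * exp (- (INR k * lam) * E w)).
 assert (HcP : forall t, continuous (fun t => G t ^ k) t) by (intros; apply cpow; auto).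
 assert (HE : forall x, is_derive E x (G x ^ k)) by (intros; apply RInt_deriv; auto).
 assert (HX : forall x, is_derive (fun t => lam + A * exp (INR k * t)) x (A * (INR k * exp (INR k * x)))).
 { intros x. auto_derive; [auto| ring]. }
 assert (HM0 : M 0 = 0).
 { unfold M, R1. rewrite H0, Rmult_0_r, exp_0, Rmult_1_r. unfold A.
   assert (lam ^ k <> 0) by (apply pow_nonzero; lra). field_simplify; auto. }
 assert (HMd : forall x, 0 < x -> is_derive M x 0).
 { intros x Hx. unfold M.
   eapply deq.
   - apply dmult.
     + unfold R1. apply dminus; [|apply is_derive_const].
       apply dmult; [|apply HX]. apply is_derive_pow. apply Hd; auto.
     + apply (is_derive_comp exp (fun t => - (INR k * lam) * E t)).
       * apply is_derive_exp.
       * apply is_derive_scal. apply HE.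
   - destruct k as [|j]; [lia|]. unfold R1. simpl pred. cbn [pow]. set (K := INR (S j)). set (EE := exp (K * x)). set (FF := exp (- (K * lam) * E x)).
     unfold scal; simpl; unfold mult, zero; simpl. match goal with |- ?g => idtac g end. ring. }
 assert (HMc : forall x, continuous M x).
 { intros x. unfold M, R1. apply cmult.
   - apply cminus; [|apply continuous_const]. apply cmult; auto. eapply dcont; apply HX.
   - apply continuous_exp_comp. eapply dcont. apply is_derive_scal. apply HE. }
 intros w Hw.
 assert (HMw : M w = 0).
 { rewrite <- HM0. symmetry. apply (const_on M (fun _ => 0)); auto.
   intros x Hx; apply HMd; lra. }
 unfold M in HMw. apply Rmult_integral in HMw. destruct HMw as [HR|HR].
 - unfold R1 in HR. fold A. lra.
 - pose proof (exp_pos (- (INR k * lam) * E w)). lra.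
Qed.


Lemma pow_le1 (x : R) n : 0 <= x <= 1 -> 0 <= x ^ n <= 1.
Proof.
 intros H. induction n as [|n IH]; simpl; [lra|]. split; [apply Rmult_le_pos; lra|].
 replace 1 with (1*1) by ring. apply Rmult_le_compat; lra.
Qed.

Lemma exp_le' x y : x <= y -> exp x <= exp y.
Proof. intros [h|h]; [left; apply exp_increasing; auto| subst; lra]. Qed.
Lemma ln_le' x y : 0 < x -> x <= y -> ln x <= ln y.
Proof. intros h [h'|h']; [left; apply ln_increasing; auto| subst; lra]. Qed.

Lemma G_pos (k : nat) (lam : R) (G : R -> R) : (1 <= k)%nat -> 0 < lam < 1 ->
  G 0 = lam -> (forall x, continuous G x) ->
  (forall w, 0 < w -> is_derive G w (lam * G w ^ S k - G w)) ->
  forall w, 0 <= w -> 0 < G w <= 1.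
Proof.
 intros Hk Hl H0 Hc Hd.
 pose proof (ode_sol k lam G Hk Hl H0 Hc Hd) as Hs.
 assert (Hnz : forall w, 0 <= w -> G w <> 0).
 { intros w Hw Hz. specialize (Hs w Hw). rewrite Hz, pow_i in Hs; [lra|lia]. }
 assert (Hpos : forall w, 0 <= w -> 0 < G w).
 { intros w Hw. destruct (Rlt_le_dec 0 (G w)) as [h|h]; auto.
   assert (G w < 0) by (pose proof (Hnz w Hw); lra).
   destruct (Req_dec w 0) as [->|hw]; [lra|].
   destruct (IVT (fun t => - G t) 0 w) as [z [Hz1 Hz2]].
   - intros x. apply continuity_pt_filterlim. apply (continuous_opp G x). auto.
   - lra.
   - lra.
   - lra.
   - exfalso. apply (Hnz z); lra. }
 intros w Hw. split; auto.
 specialize (Hs w Hw).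
 pose proof (pow_le1 lam k ltac:(lra)) as Hlk.
 assert (Hlk0 : 0 < lam ^ k) by (apply pow_lt; lra).
 assert (HA : 0 < / lam ^ k - lam).
 { assert (lam ^ k * lam < 1) by nra.
   assert (/ lam ^ k > lam); [|lra].
   apply (Rmult_lt_reg_l (lam ^ k)); auto. rewrite Rinv_r; lra. }
 assert (He : 1 <= exp (INR k * w)).
 { rewrite <- exp_0. apply exp_le'. apply Rmult_le_pos; auto. apply pos_INR. }
 assert (HX : 1 <= lam + (/ lam ^ k - lam) * exp (INR k * w)).
 { assert (1 <= / lam ^ k).
   { apply (Rmult_le_reg_l (lam ^ k)); auto. rewrite Rinv_r; lra. }
   nra. }
 assert (Hgk : G w ^ k <= 1).
 { pose proof (pow_lt (G w) k (Hpos w Hw)). nra. }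
 destruct (Rle_lt_dec (G w) 1) as [h|h]; auto.
 pose proof (Rlt_pow_R1 (G w) k h ltac:(lia)). lra.
Qed.


Lemma int_bounds (k : nat) (lam : R) (G : R -> R) : (1 <= k)%nat -> 0 < lam < 1 ->
  G 0 = lam -> (forall x, continuous G x) ->
  (forall w, 0 < w -> is_derive G w (lam * G w ^ S k - G w)) ->
  let A := / lam ^ k - lam in
  let H := fun T => RInt (fun t => G t ^ S k) 0 T in
  let U := fun T => T / lam - ln (lam + A * exp (INR k * T)) / (INR k * lam) in
  (forall T, 0 <= T -> H T <= U T - U 0) /\
  (forall T, 0 <= T -> U T - U 0 - lam <= lam * H T) /\
  (forall T1 T2, 0 <= T1 <= T2 -> H T1 <= H T2) /\
  (forall T, U T <= - ln A / (INR k * lam)) /\ 0 < A.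
Proof.
 intros Hk Hl H0 Hc Hd A H U.
 pose proof (ode_sol k lam G Hk Hl H0 Hc Hd) as Hs. fold A in Hs.
 pose proof (G_pos k lam G Hk Hl H0 Hc Hd) as Hp.
 assert (Hlk0 : 0 < lam ^ k) by (apply pow_lt; lra).
 pose proof (pow_le1 lam k ltac:(lra)) as Hlk.
 assert (HA : 0 < A).
 { unfold A. assert (lam ^ k * lam < 1) by nra.
   assert (/ lam ^ k > lam); [|lra].
   apply (Rmult_lt_reg_l (lam ^ k)); auto. rewrite Rinv_r; lra. }
 assert (Hkp : 0 < INR k) by (apply lt_0_INR; lia).
 assert (HXp : forall x, 0 < lam + A * exp (INR k * x)).
 { intros x. pose proof (exp_pos (INR k * x)). nra. }
 assert (HcS : forall t, continuous (fun t => G t ^ S k) t) by (intros; apply cpow; auto).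
 assert (HH : forall x, is_derive H x (G x ^ S k)) by (intros; apply RInt_deriv; auto).
 assert (HU : forall x, is_derive U x (/ (lam + A * exp (INR k * x)))).
 { intros x. unfold U. auto_derive.
   - apply HXp.
   - field. repeat split; try lra. apply Rgt_not_eq, HXp. }
 assert (HGk : forall x, 0 <= x -> G x ^ k = / (lam + A * exp (INR k * x))).
 { intros x Hx. specialize (Hs x Hx). specialize (HXp x).
   apply (Rmult_eq_reg_r (lam + A * exp (INR k * x))); [|lra].
   rewrite Rinv_l; lra. }
 assert (HH0 : H 0 = 0) by (unfold H; rewrite RInt_point; reflexivity).
 split; [|split; [|split; [|split]]].
 - intros T HT.
   assert (U 0 - H 0 <= U T - H T); [|lra].
   apply (incr_on (fun t => U t - H t) (fun t => / (lam + A * exp (INR k * t)) - G t ^ S k)); auto.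
   + intros x Hx. apply dminus; auto.
   + intros x Hx. rewrite <- HGk by lra. specialize (Hp x ltac:(lra)).
     pose proof (pow_lt (G x) k ltac:(lra)). simpl. nra.
   + intros x Hx. apply cminus; eapply dcont; eauto.
 - intros T HT.
   assert (lam * H 0 - G 0 - U 0 <= lam * H T - G T - U T).
   { apply (incr_on (fun t => lam * H t - G t - U t) (fun t => G t - G t ^ k)); auto.
     + intros x Hx. eapply deq.
       * apply dminus; [apply dminus|]; [apply is_derive_scal; apply HH| apply Hd; lra | apply HU].
       * rewrite <- HGk by lra. ring.
     + intros x Hx. specialize (Hp x ltac:(lra)). destruct k as [|j]; [lia|].
       simpl. pose proof (pow_le1 (G x) j ltac:(lra)). nra.
     + intros x Hx. apply cminus; [apply cminus|]; auto.
       * eapply dcont. apply is_derive_scal; apply HH.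
       * eapply dcont; eauto. }
   rewrite HH0, H0 in H1. specialize (Hp T HT). lra.
 - intros T1 T2 HT.
   apply (incr_on H (fun t => G t ^ S k)); try lra; auto.
   + intros x Hx. apply pow_le. specialize (Hp x ltac:(lra)). lra.
   + intros x _. eapply dcont; eauto.
 - intros T. unfold U.
   assert (ln A + INR k * T <= ln (lam + A * exp (INR k * T))).
   { rewrite <- (ln_exp (INR k * T)) at 1. rewrite <- ln_mult; auto; [|apply exp_pos].
     apply ln_le'. apply Rmult_lt_0_compat; auto; apply exp_pos. lra. }
   assert (HD : 0 < INR k * lam) by nra.
   apply (Rmult_le_reg_r (INR k * lam)); auto.
   field_simplify; try lra; auto.
 - auto.
Qed.


Lemma limit_exists (h : R -> R) (M : R) :
  (forall T1 T2, 0 <= T1 <= T2 -> h T1 <= h T2) -> (forall T, 0 <= T -> h T <= M) ->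
  exists l, filterlim h (Rbar_locally p_infty) (locally l) /\ (forall T, 0 <= T -> h T <= l) /\ l <= M.
Proof.
 intros Hm HM.
 set (E := fun y => exists T, 0 <= T /\ y = h T).
 destruct (completeness E) as [l [Hub Hlub]].
 - exists M. intros y [T [HT ->]]. auto.
 - exists (h 0). exists 0. split; [lra|auto].
 - exists l. split; [|split].
   + apply filterlim_locally. intros eps.
     destruct (classic (exists T, 0 <= T /\ l - eps < h T)) as [[T0 [HT0 Hh]]|Hn].
     * exists T0. intros x Hx. apply ball_R.
       assert (h x <= l) by (apply Hub; exists x; split; [lra|auto]).
       assert (h T0 <= h x) by (apply Hm; lra).
       apply Rabs_def1; pose proof (cond_pos eps); lra.
     * exfalso. assert (l <= l - eps).
       { apply Hlub. intros y [T [HT ->]]. destruct (Rle_lt_dec (h T) (l - eps)); auto.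
         exfalso; apply Hn; exists T; auto. }
       pose proof (cond_pos eps); lra.
   + intros T HT. apply Hub. exists T; auto.
   + apply Hlub. intros y [T [HT ->]]. auto.
Qed.

Lemma mean_wait_bounds (k : nat) (lam : R) (f : R -> R) : (1 <= k)%nat -> 0 < lam < 1 ->
  is_LL_ccdf (S k) lam f ->
  let A := / lam ^ k - lam in
  mean_wait (S k) f <= - ln A / (INR k * lam) + ln (lam + A) / (INR k * lam) /\
  (A < 1 -> (- ln A - ln 2 + ln (lam + A)) / (INR k * lam) - lam <= lam * mean_wait (S k) f).
Proof.
 intros Hk Hl [Hf0 [Hfr Hfd]] A.
 set (G := fun w => f (Rabs w)).
 assert (HG0 : G 0 = lam) by (unfold G; rewrite Rabs_R0; auto).
 assert (HGc : forall x, continuous G x).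
 { apply (G_cont lam f Hf0 Hfr). intros w Hw. eexists; apply Hfd; auto. }
 assert (HGe : forall w : R, 0 < w -> G w = f w) by (intros w Hw; unfold G; rewrite Rabs_right; [reflexivity|lra]).
 assert (HGd : forall w, 0 < w -> is_derive G w (lam * G w ^ S k - G w)).
 { intros w Hw. rewrite HGe by auto.
   apply (G_deriv f (fun w => lam * f w ^ S k - f w)); auto. }
 destruct (int_bounds k lam G Hk Hl HG0 HGc HGd) as [Hup [Hlo [Hmon [HUb HA]]]].
 fold A in Hup, Hlo, Hmon, HUb, HA.
 set (H := fun T => RInt (fun t => G t ^ S k) 0 T) in *.
 set (U := fun T => T / lam - ln (lam + A * exp (INR k * T)) / (INR k * lam)) in *.
 assert (Hup' : forall T, 0 <= T -> H T <= U T - U 0) by exact Hup. clear Hup. rename Hup' into Hup.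
 assert (Hlo' : forall T, 0 <= T -> U T - U 0 - lam <= lam * H T) by exact Hlo. clear Hlo. rename Hlo' into Hlo.
 assert (HUb' : forall T, U T <= - ln A / (INR k * lam)) by exact HUb. clear HUb. rename HUb' into HUb.
 destruct (limit_exists H (- ln A / (INR k * lam) - U 0) Hmon) as [l [Hlim [Hle HlM]]].
 { intros T HT. specialize (Hup T HT). specialize (HUb T). lra. }
 assert (HcS : forall t, continuous (fun t => G t ^ S k) t) by (intros; apply cpow; auto).
 assert (HH : forall x, is_derive H x (G x ^ S k)) by (intros; apply RInt_deriv; auto).
 assert (HH0 : H 0 = 0) by (unfold H; rewrite RInt_point; reflexivity).
 assert (HD : forall x, Derive H x = G x ^ S k) by (intros; apply is_derive_unique; auto).
 assert (Hint : is_RInt_gen (fun w => f w ^ S k) (at_point 0) (Rbar_locally p_infty) l).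
 { assert (Hi : is_RInt_gen (Derive H) (at_point 0) (Rbar_locally p_infty) (l - H 0)).
   { apply is_RInt_gen_Derive.
     - apply filter_forall. intros ab x _. eexists; apply HH.
     - apply filter_forall. intros ab x _. apply (continuous_ext (fun t => G t ^ S k)); auto.
     - intros P HP. apply locally_singleton in HP. exact HP.
     - exact Hlim. }
   rewrite HH0, Rminus_0_r in Hi.
   eapply is_RInt_gen_ext; [|exact Hi].
   apply (Filter_prod _ _ _ (fun x => x = 0) (fun y => 0 < y)).
   - reflexivity.
   - exists 0. auto.
   - intros x y -> Hy z Hz. simpl in Hz. rewrite Rmin_left in Hz by lra. rewrite Rmax_right in Hz by lra.
     rewrite HD, HGe by lra. reflexivity. }
 assert (Hmw : mean_wait (S k) f = l) by (unfold mean_wait; apply is_RInt_gen_unique; auto).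
 rewrite Hmw.
 assert (HU0 : U 0 = - ln (lam + A) / (INR k * lam)).
 { unfold U. rewrite Rmult_0_r, exp_0, Rmult_1_r. unfold Rdiv. ring. }
 split.
 - rewrite HU0 in HlM. lra.
 - intros HA1.
   assert (Hkp : 0 < INR k) by (apply lt_0_INR; lia).
   set (Ts := - ln A / INR k).
   assert (HTs : 0 <= Ts).
   { unfold Ts. assert (ln A < 0) by (rewrite <- ln_1; apply ln_increasing; lra).
     unfold Rdiv. apply Rmult_le_pos; [lra|]. left; apply Rinv_0_lt_compat; auto. }
   specialize (Hlo Ts HTs). specialize (Hle Ts HTs).
   assert (HUTs : - ln A / (INR k * lam) - ln 2 / (INR k * lam) <= U Ts).
   { unfold U. replace (INR k * Ts) with (- ln A) by (unfold Ts; field; lra).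
     rewrite exp_Ropp, exp_ln by auto.
     replace (lam + A * / A) with (lam + 1) by (field; lra).
     assert (ln (lam + 1) <= ln 2) by (apply ln_le'; lra).
     assert (Hp : 0 < INR k * lam) by nra.
     replace (Ts / lam) with (- ln A / (INR k * lam)) by (unfold Ts; field; lra).
     unfold Rdiv. apply Rplus_le_compat_l. apply Ropp_le_contravar.
     apply Rmult_le_compat_r; [left; apply Rinv_0_lt_compat; auto| auto]. }
   rewrite HU0 in Hlo.
   assert (lam * H Ts <= lam * l) by (apply Rmult_le_compat_l; lra).
   replace ((- ln A - ln 2 + ln (lam + A)) / (INR k * lam)) with
     (- ln A / (INR k * lam) - ln 2 / (INR k * lam) - (- ln (lam + A) / (INR k * lam))) by (field; lra).
   lra.
Qed.


Ltac nz := repeat split; apply Rgt_not_eq; simpl; nra.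

Lemma div_le (p q r : R) : 0 < r -> p <= q * r -> p / r <= q.
Proof. intros Hr H. replace q with (q * r / r) by (field; lra). unfold Rdiv. apply Rmult_le_compat_r; [left; apply Rinv_0_lt_compat|]; lra. Qed.
Lemma le_div (p q r : R) : 0 < r -> p * r <= q -> p <= q / r.
Proof. intros Hr H. replace p with (p * r / r) by (field; lra). unfold Rdiv. apply Rmult_le_compat_r; [left; apply Rinv_0_lt_compat|]; lra. Qed.
Lemma div_lt (p q r : R) : 0 < r -> p < q * r -> p / r < q.
Proof. intros Hr H. replace q with (q * r / r) by (field; lra). unfold Rdiv. apply Rmult_lt_compat_r; [apply Rinv_0_lt_compat|]; lra. Qed.

Lemma final_alg (kk lam m y eps c0 : R) : 1 <= kk -> 1/2 <= lam < 1 -> 0 < m -> 0 <= c0 ->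
  y * (kk * lam) <= m -> m - c0 <= (y + 1) * (kk * lam ^ 2) ->
  2 * (1 - lam) < eps -> 4 * c0 + 1 < eps * m ->
  Rabs (y / m - 1 / kk) < eps.
Proof.
 intros Hk Hl Hm Hc Hu Hlo He1 He2.
 set (a := y / m). set (b := 1 / kk).
 assert (Hy : y = a * m) by (unfold a; field; nz).
 assert (Hb : b * kk = 1) by (unfold b; field; nz).
 assert (Hb0 : 0 < b <= 1).
 { assert (0 < b) by (unfold b; apply Rdiv_lt_0_compat; lra). split; [lra|nra]. }
 rewrite Hy in Hu, Hlo.
 assert (Hu2 : a * lam <= b).
 { assert (a * (kk * lam) <= 1).
   { apply (Rmult_le_reg_r m); [lra|]. nra. }
   replace (a * lam) with (b * (a * (kk * lam))) by (unfold b; field; nz). nra. }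
 assert (Hl2 : b * m - 4 * b * c0 <= a * m + 1).
 { assert (Hkl : 0 < kk * lam ^ 2) by (simpl; nra).
   assert (H1 : (m - c0) / (kk * lam ^ 2) <= a * m + 1).
   { apply div_le; auto. }
   assert (H2 : b * m <= m / (kk * lam ^ 2)).
   { apply le_div; auto.
     replace (b * m * (kk * lam ^ 2)) with (m * lam ^ 2 * (b * kk)) by ring. rewrite Hb. simpl. assert (0 <= lam * (lam * 1) <= 1) by nra. nra. }
   assert (H3 : c0 / (kk * lam ^ 2) <= 4 * b * c0).
   { apply div_le; auto.
     replace (4 * b * c0 * (kk * lam ^ 2)) with (4 * c0 * lam ^ 2 * (b * kk)) by ring. rewrite Hb. simpl. assert (1/4 <= lam * (lam * 1)) by nra. nra. }
   assert ((m - c0) / (kk * lam ^ 2) = m / (kk * lam ^ 2) - c0 / (kk * lam ^ 2)) by (field; nz).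
   lra. }
 apply Rabs_def1.
 - assert ((a - b) * lam <= b * (1 - lam)) by nra.
   assert ((a - b) * lam <= 1 - lam) by nra.
   nra.
 - assert (b - a <= (4 * b * c0 + 1) / m).
   { apply le_div; auto. nra. }
   assert ((4 * b * c0 + 1) / m < eps).
   { apply div_lt; auto. nra. }
   lra.
Qed.

Lemma bernoulli (x : R) n : 0 <= x <= 1 -> 1 - INR n * (1 - x) <= x ^ n.
Proof.
 intros H. induction n as [|n IH]; [simpl; lra|].
 rewrite S_INR. cbn [pow].
 assert (INR n * x * (1 - x) <= INR n * (1 - x)).
 { pose proof (pos_INR n). apply Rmult_le_compat_r; [lra|]. nra. }
 assert (x * (1 - INR n * (1 - x)) <= x * x ^ n) by (apply Rmult_le_compat_l; lra).
 nra.
Qed.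


Theorem corollary2p3 (d : nat) (hd : (2 <= d)%nat) (F : R -> R -> R)
  (hF : forall lam, 0 < lam < 1 -> is_LL_ccdf d lam (F lam)) :
  filterlim (fun lam => - mean_wait d (F lam) / ln (1 - lam))
    (at_left 1) (locally (1 / (INR d - 1))).
Proof.
 destruct d as [|k]; [lia|].
 assert (Hk : (1 <= k)%nat) by lia.
 assert (Hkp : 1 <= INR k) by (apply (le_INR 1); lia).
 replace (INR (S k) - 1) with (INR k) by (rewrite S_INR; ring).
 apply filterlim_locally. intros eps.
 pose proof (cond_pos eps) as Heps.
 set (K1 := INR (S k)).
 assert (HK1 : 2 <= K1) by (unfold K1; rewrite S_INR; lra).
 set (c0 := ln (2 * K1)).
 assert (Hc0 : 0 <= c0) by (unfold c0; rewrite <- ln_1; apply ln_le'; lra).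
 set (C := 4 * c0 + 1).
 assert (Hd1 : 0 < 1 / (2 * K1)) by (apply Rdiv_lt_0_compat; lra).
 assert (Hd2 : 0 < Rmin (eps / 4) (exp (- (C / eps)))).
 { apply Rmin_pos; [lra| apply exp_pos]. }
 set (delta := mkposreal _ (Rmin_pos _ _ Hd1 Hd2)).
 exists delta. intros lam Hball Hlt1.
 apply ball_R2 in Hball. simpl in Hball.
 assert (Hdl1 : Rmin (1 / (2 * K1)) (Rmin (eps / 4) (exp (- (C / eps)))) <= 1 / (2 * K1)) by apply Rmin_l.
 assert (Hdl2 : Rmin (1 / (2 * K1)) (Rmin (eps / 4) (exp (- (C / eps)))) <= eps / 4)
   by (eapply Rle_trans; [apply Rmin_r| apply Rmin_l]).
 assert (Hdl3 : Rmin (1 / (2 * K1)) (Rmin (eps / 4) (exp (- (C / eps)))) <= exp (- (C / eps)))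
   by (eapply Rle_trans; [apply Rmin_r| apply Rmin_r]).
 set (e := 1 - lam).
 assert (He1 : e < 1 / (2 * K1)) by (unfold e; lra).
 assert (He2 : e < eps / 4) by (unfold e; lra).
 assert (He3 : e < exp (- (C / eps))) by (unfold e; lra).
 assert (He0 : 0 < e) by (unfold e; lra).
 assert (HeK : K1 * e < 1/2).
 { assert (K1 * e < K1 * (1 / (2 * K1))) by (apply Rmult_lt_compat_l; lra).
   replace (K1 * (1 / (2 * K1))) with (1/2) in H by (field; lra). lra. }
 assert (Hl : 0 < lam < 1) by (unfold e in *; nra).
 assert (Hl2 : 1/2 <= lam) by (unfold e in *; nra).
 destruct (mean_wait_bounds k lam (F lam) Hk Hl (hF lam Hl)) as [Hup Hlo].
 set (l := mean_wait (S k) (F lam)) in *.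
 set (A := / lam ^ k - lam) in *.
 assert (Hlk : 0 < lam ^ k) by (apply pow_lt; lra).
 pose proof (bernoulli lam (S k) ltac:(lra)) as Hb1. fold K1 in Hb1.
 pose proof (bernoulli lam k ltac:(lra)) as Hb2.
 assert (HlSk : lam ^ S k <= lam).
 { cbn [pow]. pose proof (pow_le1 lam k ltac:(lra)). nra. }
 assert (HP : 0 < 1 - lam ^ S k) by lra.
 assert (HAeq : A = (1 - lam ^ S k) * / lam ^ k) by (unfold A; cbn [pow]; field; lra).
 assert (HlA : lam + A = / lam ^ k) by (unfold A; ring).
 assert (HQ : - ln A + ln (lam + A) = - ln (1 - lam ^ S k)).
 { rewrite HlA, HAeq. rewrite ln_mult; auto; [ring|]. apply Rinv_0_lt_compat; auto. }
 set (m := - ln (1 - lam)).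
 assert (Hm : C / eps < m).
 { unfold m. fold e. assert (ln e < - (C / eps)); [|lra].
   rewrite <- (ln_exp (- (C / eps))). apply ln_increasing; auto. }
 assert (HCm : C < eps * m).
 { apply (Rmult_lt_compat_l eps) in Hm; auto. replace (eps * (C / eps)) with C in Hm by (field; lra). lra. }
 assert (HCpos : 0 < C) by (unfold C; lra).
 assert (Hm0 : 0 < m) by (apply Rlt_trans with (C / eps); auto; apply Rdiv_lt_0_compat; lra).
 assert (HQm : - ln (1 - lam ^ S k) <= m).
 { unfold m. apply Ropp_le_contravar. apply ln_le'; lra. }
 assert (HQm2 : m - ln K1 <= - ln (1 - lam ^ S k)).
 { assert (ln (1 - lam ^ S k) <= ln (K1 * e)) by (apply ln_le'; unfold e in *; lra).
   rewrite ln_mult in H by lra. unfold m. fold e. lra. }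
 assert (HA1 : A < 1).
 { rewrite HAeq. apply (Rmult_lt_reg_r (lam ^ k)); auto. rewrite Rmult_assoc, Rinv_l by lra.
   assert (1 - INR k * e > 1/2).
   { assert (INR k * e <= K1 * e) by (apply Rmult_le_compat_r; [lra| unfold K1; rewrite S_INR; lra]). lra. }
   fold e in Hb1, Hb2. lra. }
 specialize (Hlo HA1).
 assert (Hkl : 0 < INR k * lam) by nra.
 assert (Hu : l * (INR k * lam) <= m).
 { assert (l <= - ln (1 - lam ^ S k) / (INR k * lam)).
   { replace (- ln (1 - lam ^ S k) / (INR k * lam)) with (- ln A / (INR k * lam) + ln (lam + A) / (INR k * lam)).
     - exact Hup.
     - rewrite <- HQ. field. lra. }
   apply (Rmult_le_compat_r (INR k * lam)) in H; [|lra].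
   replace (- ln (1 - lam ^ S k) / (INR k * lam) * (INR k * lam)) with (- ln (1 - lam ^ S k)) in H by (field; lra).
   lra. }
 assert (Hlo2 : m - c0 <= (l + 1) * (INR k * lam ^ 2)).
 { replace (- ln A - ln 2 + ln (lam + A)) with (- ln (1 - lam ^ S k) - ln 2) in Hlo by lra.
   apply (Rmult_le_compat_r (INR k * lam)) in Hlo; [|lra].
   replace (((- ln (1 - lam ^ S k) - ln 2) / (INR k * lam) - lam) * (INR k * lam))
     with (- ln (1 - lam ^ S k) - ln 2 - lam * (INR k * lam)) in Hlo by (field; lra).
   unfold c0. rewrite ln_mult by lra.
   replace ((l + 1) * (INR k * lam ^ 2)) with (lam * l * (INR k * lam) + lam * (INR k * lam)) by (simpl; ring).
   lra. }
 apply ball_R.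
 assert (Hln : ln (1 - lam) <> 0) by (unfold m in Hm0; intro h; rewrite h in Hm0; lra).
 unfold e. replace (- l / ln (1 - lam)) with (l / m) by (unfold m; field; auto).
 apply (final_alg (INR k) lam m l eps c0); auto; lra.
Qed.
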